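(* Let $q$ be a prime power and $\mathcal{U}\subseteq\mathbb{P}_q(n)$ a linear code with $|\mathcal{U}|\ge 2$. Then its normalized minimum distance satisfies $\delta\le\frac12$, and $\delta=\frac12$ if and only if $\mathcal{U}$ is equidistant. In particular, the largest normalized minimum distance of a linear code in $\mathbb{P}_q(n)$ is $\frac12$.
   Context: $\mathbb{P}_q(n)$ denotes the set of all subspaces of $\mathbb{F}_q^n$. For $X,Y\in\mathbb{P}_q(n)$ the subspace distance is $d_S(X,Y)=\dim X+\dim Y-2\dim(X\cap Y)$. A linear code in $\mathbb{P}_q(n)$ is a subset $\mathcal{U}\subseteq\mathbb{P}_q(n)$ with $\{0\}\in\mathcal{U}$ for which there exists a map $\boxplus:\mathcal{U}\times\mathcal{U}\to\mathcal{U}$ such that (i) $(\mathcal{U},\boxplus)$ is an abelian group; (ii) its identity element is $\{0\}$; (iii) $X\boxplus X=\{0\}$ for all $X\in\mathcal{U}$; (iv) $d_S(Y_1\boxplus X,Y_2\boxplus X)=d_S(Y_1,Y_2)$ for all $Y_1,Y_2,X\in\mathcal{U}$. A linear code is equidistant if there is $r$ with $d_S(X,Y)=r$ for all distinct $X,Y\in\mathcal{U}$. With $d=\min\{d_S(X,Y):X,Y\in\mathcal{U},X\ne Y\}$ (the minimum distance) and $l=\max_{X\in\mathcal{U}}\dim X$, the normalized minimum distance is $\delta=d/(2l)$. *)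

(* Defs.v *)
(* Subspaces of F_q^n are {vspace 'rV[F]_n} for a finite field F
   (q = #|F|, automatically a prime power). *)
From HB Require Import structures.
From mathcomp Require Import all_boot all_order all_algebra.
Set Implicit Arguments. Unset Strict Implicit. Unset Printing Implicit Defensive.
Import Order.TTheory GRing.Theory Num.Theory.

Local Open Scope ring_scope.

Section Defs.
Variables (F : finFieldType) (n : nat).
Notation sub := {vspace 'rV[F]_n}.

(* subspace distance d_S(X,Y) = dim X + dim Y - 2 dim (X cap Y) (no truncation
   actually occurs since dim (X :&: Y) <= dim X, dim Y) *)
Definition subspace_dist (X Y : sub) : nat :=
  (\dim X + \dim Y - 2 * \dim (X :&: Y))%N.

(* A code is a finite set of subspaces, given as a duplicate-free list. *)
Definition is_linear_code (U : seq sub) : Prop :=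
  uniq U /\ (0%VS \in U) /\
  exists boxplus : sub -> sub -> sub,
    (forall X Y, X \in U -> Y \in U -> boxplus X Y \in U) /\
    [/\ 
        (forall X Y Z, X \in U -> Y \in U -> Z \in U ->
            boxplus X (boxplus Y Z) = boxplus (boxplus X Y) Z),
        (forall X Y, X \in U -> Y \in U -> boxplus X Y = boxplus Y X),
        (forall X, X \in U -> boxplus 0%VS X = X),
        (forall X, X \in U -> boxplus X X = 0%VS) &
        (forall Y1 Y2 X, Y1 \in U -> Y2 \in U -> X \in U ->
            subspace_dist (boxplus Y1 X) (boxplus Y2 X) = subspace_dist Y1 Y2)].

Definition is_equidistant (U : seq sub) : Prop :=
  exists r : nat, forall X Y, X \in U -> Y \in U -> X != Y -> subspace_dist X Y = r.

Definition is_min_dist (U : seq sub) (d : nat) : Prop :=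
  (exists X Y, [/\ X \in U, Y \in U, X != Y & subspace_dist X Y = d]) /\
  (forall X Y, X \in U -> Y \in U -> X != Y -> (d <= subspace_dist X Y)%N).

Definition is_max_dim (U : seq sub) (l : nat) : Prop :=
  (exists2 X, X \in U & \dim X = l) /\ (forall X, X \in U -> (\dim X <= l)%N).

Definition normalized (d l : nat) : rat := (d%:R / (2 * l)%:R).

End Defs.

(* Main.v *)
Require Import Defs.
From HB Require Import structures.
From mathcomp Require Import all_boot all_order all_algebra.
From mathcomp Require Import ring.
Import Order.TTheory GRing.Theory Num.Theory.
Local Open Scope ring_scope.

Lemma dist0 (F : finFieldType) (n : nat) (X : {vspace 'rV[F]_n}) :
  subspace_dist X 0%VS = \dim X.
Proof. by rewrite /subspace_dist capv0 dimv0 muln0 addn0 subn0. Qed.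

Lemma dist0l (F : finFieldType) (n : nat) (X : {vspace 'rV[F]_n}) :
  subspace_dist 0%VS X = \dim X.
Proof. by rewrite /subspace_dist cap0v dimv0 muln0 add0n subn0. Qed.

Lemma norm_le (d l : nat) : (0 < l)%N -> (d <= l)%N -> normalized d l <= 1 / 2.
Proof.
move=> l0 dl; rewrite /normalized ler_pdivrMr ?ltr0n ?muln_gt0 //.
have -> : 1 / 2 * ((2 * l)%:R) = l%:R :> rat by rewrite natrM; field.
by rewrite ler_nat.
Qed.

Lemma norm_eq (d l : nat) : (0 < l)%N -> (normalized d l = 1 / 2 <-> d = l).
Proof.
move=> l0; rewrite /normalized; split; last first.
  move=> ->; rewrite natrM; field.
  by rewrite pnatr_eq0 -lt0n.
move=> H; apply/eqP; rewrite -(eqr_nat rat).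
have h2 : (2 * l)%:R != 0 :> rat by rewrite pnatr_eq0 muln_eq0 negb_or /= -lt0n.
have -> : d%:R = d%:R / (2 * l)%:R * (2 * l)%:R :> rat by rewrite divfK.
by rewrite H natrM; apply/eqP; field.
Qed.

Theorem corollary1 (F : finFieldType) (n : nat) :
  (forall (U : seq {vspace 'rV[F]_n}), is_linear_code U -> (2 <= size U)%N ->
     forall d l : nat, is_min_dist U d -> is_max_dim U l ->
       normalized d l <= 1 / 2 /\
       (normalized d l = 1 / 2 <-> is_equidistant U)) /\
  ((0 < n)%N ->
     exists (U : seq {vspace 'rV[F]_n}) (d l : nat),
       [/\ is_linear_code U, (2 <= size U)%N, is_min_dist U d, is_max_dim U l
         & normalized d l = 1 / 2]).
Proof.
split.
  move=> U [Uu [U0 [bp [bpU [bpA bpC bp0 bpK bpD]]]]] _ d l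
    [[X0 [Y0 [X0U Y0U X0Y0 dX0Y0]]] Hmin] [[Xl XlU dXl] Hmax].
  have [Z ZU Z0] : exists2 Z, Z \in U & Z != 0%VS.
    case: (eqVneq X0 0%VS) => [e|]; last by exists X0.
    by exists Y0 => //; rewrite -e eq_sym.
  have l0 : (0 < l)%N.
    apply: leq_trans (Hmax _ ZU); by rewrite lt0n dimv_eq0.
  have Xl0 : Xl != 0%VS by rewrite -dimv_eq0 dXl -lt0n.
  have dl : (d <= l)%N by rewrite -dXl -(@dist0 _ _ Xl) Hmin.
  split; first exact: norm_le.
  rewrite norm_eq //; split.
    move=> edl; exists l => X Y XU YU XY; apply/eqP; rewrite eqn_leq.
    rewrite -{2}edl Hmin // andbT.
    by rewrite -(bpD X Y Y) // bpK // dist0 Hmax // bpU.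
  move=> [r Hr]; have dr : d = r by rewrite -dX0Y0 Hr.
  by rewrite dr -dXl -(@dist0 _ _ Xl) Hr.
move=> n0.
have dimf : \dim (fullv : {vspace 'rV[F]_n}) = n by rewrite dimvf /dim /= mul1n.
have f0 : (fullv : {vspace 'rV[F]_n}) != 0%VS by rewrite -dimv_eq0 dimf -lt0n.
have d0f : subspace_dist (fullv : {vspace 'rV[F]_n}) 0%VS = n by rewrite dist0.
have df0 : subspace_dist 0%VS (fullv : {vspace 'rV[F]_n}) = n by rewrite dist0l.
have dxx : forall X : {vspace 'rV[F]_n}, subspace_dist X X = 0%N.
  by move=> X; rewrite /subspace_dist capvv addnn -mul2n subnn.
have f0' := f0; rewrite eq_sym in f0'.
exists [:: 0%VS; fullv], n, n; split.
- split; first by rewrite /= inE andbT.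
  split; first by rewrite inE eqxx.
  exists (fun X Y => if X == Y then 0%VS else fullv).
  have memU : forall X : {vspace 'rV[F]_n},
      X \in [:: 0%VS; fullv] -> X = 0%VS \/ X = fullv.
    by move=> X; rewrite !inE => /orP[/eqP->|/eqP->]; [left|right].
  split.
    by move=> X Y _ _; case: (X == Y); rewrite !inE eqxx ?orbT.
  have E1 : (fullv == fullv :> {vspace 'rV[F]_n}) = true := eqxx _.
  have E2 : (0%VS == 0%VS :> {vspace 'rV[F]_n}) = true := eqxx _.
  have T := (E1, E2, negbTE f0, negbTE f0', d0f, df0, dxx).
  split.
  + move=> X Y Z XU YU ZU; case: (memU X XU) => ->; case: (memU Y YU) => ->;
      case: (memU Z ZU) => ->; by rewrite ?eqxx ?T.
  + move=> X Y XU YU; case: (memU X XU) => ->; case: (memU Y YU) => ->;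
      by rewrite ?eqxx ?T.
  + move=> X XU; case: (memU X XU) => ->; by rewrite ?eqxx ?T.
  + by move=> X _; rewrite eqxx.
  + move=> X Y Z XU YU ZU; case: (memU X XU) => ->; case: (memU Y YU) => ->;
      case: (memU Z ZU) => ->; by rewrite ?eqxx ?T.
- by [].
- split.
    exists 0%VS, fullv; split; rewrite ?inE ?eqxx ?orbT //.
  move=> X Y; rewrite !inE => /orP[]/eqP-> /orP[]/eqP->;
    by rewrite ?eqxx ?d0f ?df0.
- split; first by exists fullv; rewrite ?inE ?eqxx ?orbT.
  move=> X; rewrite !inE => /orP[]/eqP->; by rewrite ?dimv0 ?dimf.
- by apply/norm_eq.
Qed.
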